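(* Let $X$ be a finite dimensional real Banach space and let $f: X \to X$ be piecewise affine and nonexpansive with respect to the norm of $X$. Suppose $v, w \in X$ satisfy $f(v + tw) = v + (t+1)w$ for all $t \ge 0$. Let $g(x) = f(x) - w$ for $x \in X$. Then for every $x \in X$ there exists $m \in \mathbb{N}$ such that $$f^{k+m}(x) = g^k(f^m(x)) + k w$$ for all $k \in \mathbb{N}$.
   Context: $f$ is piecewise affine if $X$ is a finite union of closed convex sets on each of which $f$ agrees with an affine map. $f$ is nonexpansive with respect to the norm if $\|f(x) - f(y)\| \le \|x - y\|$ for all $x,y$. *)

(* Defs.v *)
From HB Require Import structures.
From mathcomp Require Import all_boot all_order all_algebra.
From mathcomp Require Import reals.
Set Implicit Arguments. Unset Strict Implicit. Unset Printing Implicit Defensive.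
Import Order.TTheory GRing.Theory Num.Theory.
Local Open Scope ring_scope.

(* A finite-dimensional real normed space is modelled as 'rV[R]_n equipped
   with an arbitrary norm N (every finite-dimensional real Banach space is
   linearly isometric to such a space). *)
Definition is_norm (R : realType) (n : nat) (N : 'rV[R]_n -> R) : Prop :=
  [/\ (forall x, N x = 0 -> x = 0),
      (forall (a : R) x, N (a *: x) = `|a| * N x) &
      (forall x y, N (x + y) <= N x + N y)].

Definition closed_wrt (R : realType) (n : nat) (N : 'rV[R]_n -> R)
    (C : 'rV[R]_n -> Prop) : Prop :=
  forall x, ~ C x -> exists2 e : R, 0 < e & forall y, N (y - x) < e -> ~ C y.

Definition convex_set (R : realType) (n : nat) (C : 'rV[R]_n -> Prop) : Prop :=
  forall x y (t : R), C x -> C y -> 0 <= t -> t <= 1 ->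
    C (t *: x + (1 - t) *: y).

Definition affine_on (R : realType) (n : nat) (f : 'rV[R]_n -> 'rV[R]_n)
    (C : 'rV[R]_n -> Prop) : Prop :=
  exists (A : 'M[R]_n) (b : 'rV[R]_n), forall x, C x -> f x = x *m A + b.

Definition piecewise_affine (R : realType) (n : nat) (N : 'rV[R]_n -> R)
    (f : 'rV[R]_n -> 'rV[R]_n) : Prop :=
  exists (k : nat) (C : 'I_k -> 'rV[R]_n -> Prop),
    (forall x, exists i, C i x) /\
    (forall i, [/\ closed_wrt N (C i), convex_set (C i) & affine_on f (C i)]).

Definition nonexpansive (R : realType) (n : nat) (N : 'rV[R]_n -> R)
    (f : 'rV[R]_n -> 'rV[R]_n) : Prop :=
  forall x y, N (f x - f y) <= N (x - y).

(* Main.v *)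
Require Import Defs.
From HB Require Import structures.
From mathcomp Require Import all_boot all_order all_algebra.
From mathcomp Require Import reals.
From Stdlib Require Import Classical.
Import Order.TTheory GRing.Theory Num.Theory.
Local Open Scope ring_scope.

Section Aux.
Variables (R : realType) (n : nat) (N : 'rV[R]_n -> R).
Hypothesis hN : is_norm N.

Lemma N0 : N 0 = 0.
Proof. case: hN => _ hZ _. by rewrite -(scale0r (0 : 'rV[R]_n)) hZ normr0 mul0r. Qed.

Lemma NN x : N (- x) = N x.
Proof. case: hN => _ hZ _. by rewrite -scaleN1r hZ normrN normr1 mul1r. Qed.

Lemma Nge0 x : 0 <= N x.
Proof.
case: hN => _ _ hT. have := hT x (- x). rewrite subrr N0 NN => h.
have : 0 <= N x *+ 2 by rewrite mulr2n.
by rewrite pmulrn_lge0.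
Qed.

Lemma Nsub x y z : N (x - z) <= N (x - y) + N (y - z).
Proof. case: hN => _ _ hT. by have := hT (x - y) (y - z); rewrite addrA subrK. Qed.

Lemma Neq0 d : N d = 0 -> d = 0.
Proof. by case: hN => h _ _; apply: h. Qed.

Lemma NZ (a : R) x : N (a *: x) = `|a| * N x.
Proof. by case: hN => _ h _; apply: h. Qed.

Lemma ND x y : N (x + y) <= N x + N y.
Proof. by case: hN => _ _ h; apply: h. Qed.

End Aux.

Lemma nat_above (R : realType) (T : R) : exists M : nat, T < M%:R.
Proof.
exists (Num.Def.archi_bound `|T|).
apply: (le_lt_trans (ler_norm T)). exact: archi_boundP.
Qed.

From mathcomp Require Import ring lra.

Lemma bad_bound (R : realType) (n : nat) (N : 'rV[R]_n -> R) (hN : is_norm N)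
  (C : 'rV[R]_n -> Prop) (hC : closed_wrt N C) (hconv : convex_set C)
  (v w : 'rV[R]_n) (r : R) p lam :
  C p -> 0 <= lam -> ~ C (p + lam *: w) ->
  exists T : R, forall u t, N (u - v) <= r -> T < t -> ~ C (u + t *: w).
Proof.
move=> Cp lam0 nC; have [e e0 He] := hC _ nC.
set K := `|r + N (v - p)|.
have K0 : 0 <= K by apply: normr_ge0.
exists (lam * (K / e + 1)) => u t hu hT Ct.
have Ke : 0 <= K / e by apply: divr_ge0 => //; apply: ltW.
have T0 : 0 <= lam * (K / e + 1) by apply: mulr_ge0 => //; lra.
have t0 : 0 < t by apply: le_lt_trans T0 hT.
have lamt : lam <= t.
  apply: le_trans (ltW hT). rewrite mulrDr mulr1. have : 0 <= lam * (K / e) by apply: mulr_ge0.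
  lra.
set s := lam / t.
have s0 : 0 <= s by apply: divr_ge0 => //; apply: ltW.
have s1 : s <= 1 by rewrite /s ler_pdivrMr // mul1r.
have Cq := hconv _ _ s Ct Cp s0 s1.
apply: (He _ _ Cq).
have -> : s *: (u + t *: w) + (1 - s) *: p - (p + lam *: w) = s *: (u - p).
  apply/rowP => j; rewrite !mxE /s. field. by rewrite gt_eqF.
rewrite NZ // ger0_norm //.
have h1 : N (u - p) <= K.
  apply: le_trans (@Nsub _ _ _ hN u v p) _. apply: le_trans (ler_norm _). lra.
apply: le_lt_trans (ler_wpM2l s0 h1) _.
rewrite /s mulrAC ltr_pdivrMr //.
have E : e * (lam * (K / e + 1)) = lam * K + lam * e.
  field. by rewrite gt_eqF.
have : e * (lam * (K / e + 1)) < e * t by rewrite ltr_pM2l.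
rewrite E. have : 0 <= lam * e by apply: mulr_ge0 => //; apply: ltW.
lra.
Qed.

Lemma good_ray (R : realType) (n : nat) (N : 'rV[R]_n -> R) (hN : is_norm N)
  (f : 'rV[R]_n -> 'rV[R]_n) (hne : nonexpansive N f) (v w : 'rV[R]_n)
  (hv : forall t : R, 0 <= t -> f (v + t *: w) = v + (t + 1) *: w)
  (C : 'rV[R]_n -> Prop) (A : 'M[R]_n) (b : 'rV[R]_n)
  (hA : forall x, C x -> f x = x *m A + b) p :
  (forall lam, 0 <= lam -> C (p + lam *: w)) ->
  forall lam, 0 <= lam -> f (p + lam *: w) = f p + lam *: w.
Proof.
move=> hC.
have Cp : C p by have := hC 0 (lexx _); rewrite scale0r addr0.
set d := w *m A - w. set c := p *m A + b - v - w.
have key : forall lam, 0 <= lam -> N (c + lam *: d) <= N (p - v).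
  move=> lam l0; have := hne (p + lam *: w) (v + lam *: w).
  rewrite hA ?hv //; last by apply: hC.
  rewrite mulmxDl -scalemxAl.
  have -> : p *m A + lam *: (w *m A) + b - (v + (lam + 1) *: w) = c + lam *: d.
    rewrite /c /d. move: (p *m A) (w *m A) => pA wA.
    apply/rowP => j; rewrite !mxE; ring.
  have -> // : p + lam *: w - (v + lam *: w) = p - v.
  apply/rowP => j; rewrite !mxE; ring.
have d0 : d = 0.
  apply: (@Neq0 _ _ _ hN); apply/eqP; rewrite eq_le (@Nge0 _ _ _ hN) andbT.
  rewrite leNgt; apply/negP => hd.
  set K := N (p - v) + N c.
  have K0 : 0 <= K by apply: addr_ge0; apply: (@Nge0 _ _ _ hN).
  set lam := (K + 1) / N d.
  have l0 : 0 <= lam by apply: divr_ge0; [lra | apply: ltW].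
  have E : N (lam *: d) = K + 1.
    rewrite (@NZ _ _ _ hN) ger0_norm // /lam divfK //; by rewrite gt_eqF.
  have : N (lam *: d) <= N (c + lam *: d) + N (- c).
    have := @ND _ _ _ hN (c + lam *: d) (- c).
    by rewrite addrC addKr.
  rewrite E (@NN _ _ _ hN) => h. have := key lam l0. rewrite /K in h *. lra.
move=> lam l0; rewrite !hA //; last by apply: hC.
have wA : w *m A = w by apply: subr0_eq.
rewrite mulmxDl -scalemxAl wA. move: (p *m A) => pA.
apply/rowP => j; rewrite !mxE; ring.
Qed.

Lemma uniform (R : realType) (n : nat) (N : 'rV[R]_n -> R) (hN : is_norm N)
  (f : 'rV[R]_n -> 'rV[R]_n) (hpa : piecewise_affine N f)
  (hne : nonexpansive N f) (v w : 'rV[R]_n)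
  (hv : forall t : R, 0 <= t -> f (v + t *: w) = v + (t + 1) *: w) (r : R) :
  exists M : nat, forall u t, N (u - v) <= r -> M%:R <= t ->
    forall lam, 0 <= lam -> f (u + t *: w + lam *: w) = f (u + t *: w) + lam *: w.
Proof.
case: hpa => k [C [hcov hpc]].
pose P (i : 'I_k) (M : nat) := forall u t, N (u - v) <= r -> M%:R <= t ->
  C i (u + t *: w) ->
  forall lam, 0 <= lam -> f (u + t *: w + lam *: w) = f (u + t *: w) + lam *: w.
have mono : forall i M M', (M <= M')%N -> P i M -> P i M'.
  move=> i M M' hM hP u t hu ht; apply: hP => //.
  by apply: le_trans ht; rewrite ler_nat.
have per : forall i, exists M, P i M.
  move=> i; case: (hpc i) => hcl hcv [A [b hA]].
  case: (classic (exists p lam, C i p /\ 0 <= lam /\ ~ C i (p + lam *: w))).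
  - move=> [p [lam [Cp [l0 nC]]]].
    have [T HT] := @bad_bound _ _ _ hN _ hcl hcv v w r _ _ Cp l0 nC.
    have [M HM] := @nat_above _ T.
    exists M => u t hu ht Ct; exfalso; apply: (HT u t hu _ Ct).
    exact: lt_le_trans HM ht.
  - move=> hno; exists 0%N => u t hu ht Ct.
    apply: (@good_ray _ _ _ hN f hne v w hv _ A b hA) => lam' l'.
    apply: NNPP => nC; apply: hno; by exists (u + t *: w), lam'.
have all : forall k', exists M, forall i : 'I_k, (i < k')%N -> P i M.
  elim=> [|k' [M HM]]; first by exists 0%N.
  case: (ltnP k' k) => hk.
  - have [M0 HM0] := per (Ordinal hk).
    exists (maxn M M0) => i hi.
    case: (ltnP i k') => hik.
    + by apply: (mono _ M); [apply: leq_maxl | apply: HM].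
    + have ei : i = Ordinal hk.
        by apply: val_inj => /=; apply/eqP; rewrite eqn_leq hik -ltnS hi.
      by rewrite ei; apply: (mono _ M0); [apply: leq_maxr | apply: HM0].
  - exists M => i hi; apply: HM. exact: leq_trans (ltn_ord i) hk.
have [M HM] := all k.
exists M => u t hu ht.
have [i Ci] := hcov (u + t *: w).
exact: (HM i (ltn_ord i) u t hu ht Ci).
Qed.

Theorem mainTheorem9 (R : realType) (n : nat) (N : 'rV[R]_n -> R)
    (f : 'rV[R]_n -> 'rV[R]_n) (v w : 'rV[R]_n) :
  is_norm N -> piecewise_affine N f -> nonexpansive N f ->
  (forall t : R, 0 <= t -> f (v + t *: w) = v + (t + 1) *: w) ->
  let g := fun x => f x - w in
  forall x : 'rV[R]_n, exists m : nat, forall k : nat,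
    iter (k + m) f x = iter k g (iter m f x) + k%:R *: w.
Proof.
move=> hN hpa hne hv g x.
have iv : forall j : nat, iter j f v = v + j%:R *: w.
  elim=> [|j IH] /=; first by rewrite scale0r addr0.
  by rewrite IH hv ?ler0n // -[j.+1]addn1 natrD.
have ine : forall j y z, N (iter j f y - iter j f z) <= N (y - z).
  elim=> //= j IH y z; exact: le_trans (hne _ _) (IH y z).
have [M HM] := @uniform _ _ _ hN f hpa hne v w hv (N (x - v)).
exists M; elim=> [|k IH]; first by rewrite add0n /= scale0r addr0.
rewrite addSn /=.
set z := iter (k + M) f x in IH *.
have eg : iter k g (iter M f x) = z - k%:R *: w by rewrite IH addrK.
rewrite eg /g.
set u := z - (k + M)%:R *: w.
have hu : N (u - v) <= N (x - v).
  have -> : u - v = z - iter (k + M) f v.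
    rewrite iv /u natrD; apply/rowP => j; rewrite !mxE; ring.
  exact: ine.
have E1 : z - k%:R *: w = u + M%:R *: w.
  rewrite /u natrD; apply/rowP => j; rewrite !mxE; ring.
have E2 : z = u + M%:R *: w + k%:R *: w.
  rewrite /u natrD; apply/rowP => j; rewrite !mxE; ring.
rewrite E1 {1}E2 (HM u M%:R hu (lexx _) k%:R (ler0n _ _)).
rewrite -[k.+1]addn1 natrD; apply/rowP => j; rewrite !mxE; ring.
Qed.
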